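(* Let $(F_S,\iota)$ be an embedded local étale algebra and $\Gamma\subseteq\mathrm{PGL}_2(F_S)$ a discrete subgroup. Then \[ \mathcal L^S_\Gamma\subseteq\bigcup_{\mathfrak p\in S}\Big(\mathbb P^1(F_\mathfrak p)\times\prod_{\mathfrak q\in S\setminus\{\mathfrak p\}}\mathbb P^1(\mathbf C)\Big), \] i.e. every limit point has at least one coordinate $x_\mathfrak p$ lying in $\mathbb P^1(F_\mathfrak p)$.
   Context: Fix a prime $p$ and let $\mathbf{C}$ be the completion of an algebraic closure of $\mathbb{Q}_p$ or of $\mathbb{F}_p((T))$. An embedded local étale algebra $(F_S,\iota)$ consists of a finite non-empty set $S$, non-Archimedean local fields $F_\mathfrak p$ ($\mathfrak p\in S$) of residue characteristic $p$ and the same characteristic as $\mathbf C$, and embeddings $\iota_\mathfrak p\colon F_\mathfrak p\hookrightarrow\mathbf C$, through which $\mathbb P^1(F_\mathfrak p)\subseteq\mathbb P^1(\mathbf C)$. $\mathrm{PGL}_2(F_S)=\prod_\mathfrak p\mathrm{PGL}_2(F_\mathfrak p)$ (with its locally compact topology) acts componentwise by Möbius transformations on $\mathbb P^1(\mathbf C_S)=\prod_{\mathfrak p\in S}\mathbb P^1(\mathbf C)$. For a subgroup $\Gamma$, $\mathcal L^S_\Gamma$ is the set of $x\in\mathbb P^1(\mathbf C_S)$ such that $\gamma_j(y)\to x$ for some $y$ and pairwise distinct $\gamma_j\in\Gamma$. *)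

(* Defs.v *)
From HB Require Import structures.
From mathcomp Require Import all_boot all_order all_algebra.
From mathcomp Require Import reals.

Set Implicit Arguments.
Unset Strict Implicit.
Unset Printing Implicit Defensive.

Import Order.TTheory GRing.Theory Num.Theory.
Local Open Scope ring_scope.

Section Defs.
Variables (R : realType) (C : closedFieldType) (abs : C -> R).

Definition nonarch_abs : Prop :=
  (forall x, 0 <= abs x) /\ (forall x, abs x = 0 <-> x = 0) /\
  (forall x y, abs (x * y) = abs x * abs y) /\
  (forall x y, abs (x + y) <= Num.max (abs x) (abs y)).

Definition seq_cvg (u : nat -> C) (l : C) : Prop :=
  forall eps : R, 0 < eps -> exists N, forall n, (N <= n)%N -> abs (u n - l) < eps.

Definition abs_complete : Prop :=
  forall u : nat -> C,
    (forall eps : R, 0 < eps -> exists N, forall m n, (N <= m)%N -> (N <= n)%N ->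
        abs (u m - u n) < eps) ->
    exists l, seq_cvg u l.

Definition abs_dense (P : C -> Prop) : Prop :=
  forall x (eps : R), 0 < eps -> exists y, P y /\ abs (x - y) < eps.

Definition algebraic_over (A : C -> Prop) (y : C) : Prop :=
  exists P : {poly C}, P != 0 /\ root P y /\ forall i, A P`_i.

(** (C, abs) is (isometric, up to scaling of the absolute value, to) the
    completion of an algebraic closure of Q_p (first case: char 0, |p|<1,
    algebraic numbers dense) or of F_p((T)) (second case: char p, an element
    t with 0<|t|<1, and elements algebraic over F_p(t) dense). C is
    algebraically closed by its type. *)
Definition is_C_field (p : nat) : Prop :=
  prime p /\ nonarch_abs /\ abs_complete /\
  ( ([pchar C] =i pred0 /\ abs (p%:R) < 1 /\
      abs_dense (algebraic_over (fun c => exists z : int, c = z%:~R)))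
  \/ (p \in [pchar C] /\ exists t : C, 0 < abs t < 1 /\
      abs_dense (algebraic_over
         (fun c => exists f : {poly int}, c = (map_poly (fun z : int => z%:~R) f).[t])))).

Definition is_subfield (K : C -> Prop) : Prop :=
  K 0 /\ K 1 /\ (forall x y, K x -> K y -> K (x - y) /\ K (x * y)) /\
  (forall x, K x -> K x^-1).

(** K is the image of a (continuous) embedding of a non-Archimedean local
    field: a non-discrete subfield of C whose closed unit ball is
    (sequentially) compact for the induced topology. *)
Definition embedded_local_field (K : C -> Prop) : Prop :=
  is_subfield K /\ (exists x, K x /\ 0 < abs x < 1) /\
  (forall u : nat -> C, (forall n, K (u n) /\ abs (u n) <= 1) ->
     exists (phi : nat -> nat) (l : C),
       (forall m n, (m < n)%N -> (phi m < phi n)%N) /\ K l /\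
       seq_cvg (fun n => u (phi n)) l).

Definition i0 : 'I_2 := @ord0 1.
Definition i1 : 'I_2 := @ord_max 1.

(** Chordal distance on P^1(C), points given by nonzero column vectors. *)
Definition chordal (u v : 'cV[C]_2) : R :=
  abs (u i0 ord0 * v i1 ord0 - u i1 ord0 * v i0 ord0) /
  (Num.max (abs (u i0 ord0)) (abs (u i1 ord0)) *
   Num.max (abs (v i0 ord0)) (abs (v i1 ord0))).

Variable S : finType.

(** Equality in PGL_2(F_S) of two families of matrices. *)
Definition proj_eq (g h : S -> 'M[C]_2) : Prop :=
  forall s, exists c : C, c != 0 /\ g s = c *: h s.

(** G is the (full) preimage in prod_s GL_2(K s) of a subgroup of
    PGL_2(F_S) = prod_s PGL_2(K s). *)
Definition pgl_subgroup (K : S -> C -> Prop) (G : (S -> 'M[C]_2) -> Prop) : Prop :=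
  (forall g, G g -> forall s, (forall i j, K s (g s i j)) /\ \det (g s) != 0) /\
  G (fun _ => 1%:M) /\
  (forall g h, G g -> G h -> G (fun s => g s *m h s)) /\
  (forall g, G g -> G (fun s => invmx (g s))) /\
  (forall g (c : S -> C), G g -> (forall s, K s (c s) /\ c s != 0) ->
      G (fun s => c s *: g s)).

Definition pgl_discrete (G : (S -> 'M[C]_2) -> Prop) : Prop :=
  exists eps : R, 0 < eps /\
    forall g, G g -> (forall s i j, abs (g s i j - (1%:M : 'M[C]_2) i j) < eps) ->
      proj_eq g (fun _ => 1%:M).

Definition limit_point (G : (S -> 'M[C]_2) -> Prop) (x : S -> 'cV[C]_2) : Prop :=
  (forall s, x s != 0) /\
  exists (y : S -> 'cV[C]_2) (gam : nat -> S -> 'M[C]_2),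
    (forall s, y s != 0) /\ (forall j, G (gam j)) /\
    (forall i j, i <> j -> ~ proj_eq (gam i) (gam j)) /\
    forall s (eps : R), 0 < eps -> exists N, forall j, (N <= j)%N ->
      chordal (gam j s *m y s) (x s) < eps.

End Defs.

Definition in_P1 (C : fieldType) (K : C -> Prop) (v : 'cV[C]_2) : Prop :=
  exists w : 'cV[C]_2, w != 0 /\ (forall i, K (w i ord0)) /\ exists c : C, v = c *: w.

(* Main.v *)
Require Import Defs.
From HB Require Import structures.
From mathcomp Require Import all_boot all_order all_algebra.
From mathcomp Require Import reals.
From mathcomp Require Import ring lra.
From Stdlib Require Import IndefiniteDescription.
Import Order.TTheory GRing.Theory Num.Theory.
Local Open Scope ring_scope.
Set Implicit Arguments.
Unset Strict Implicit.

Section Abs.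
Variables (R : realType) (C : closedFieldType) (abs : C -> R).
Hypothesis hAbs : nonarch_abs abs.

Lemma abs_ge0 x : 0 <= abs x. Proof. by case: hAbs. Qed.
Lemma abs_eq0 x : abs x = 0 <-> x = 0. Proof. by case: hAbs => _ []. Qed.
Lemma absM x y : abs (x * y) = abs x * abs y. Proof. by case: hAbs => _ [_ []]. Qed.
Lemma absD x y : abs (x + y) <= Num.max (abs x) (abs y). Proof. by case: hAbs => _ [_ []]. Qed.
Lemma abs0 : abs 0 = 0. Proof. by apply/abs_eq0. Qed.
Lemma abs1 : abs 1 = 1.
Proof.
have h : abs 1 = abs 1 * abs 1 by rewrite -absM mulr1.
have n0 : abs 1 != 0 by apply/eqP => /abs_eq0 /eqP; rewrite oner_eq0.
by apply: (mulfI n0); rewrite mulr1 -h.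
Qed.
Lemma absN x : abs (- x) = abs x.
Proof.
have h : abs (-1) * abs (-1) = 1 by rewrite -absM mulrNN mulr1 abs1.
have h0 := abs_ge0 (-1).
have e : abs (-1) = 1 by nra.
by rewrite -mulN1r absM e mul1r.
Qed.
Lemma absB x y : abs (x - y) = abs (y - x).
Proof. by rewrite -absN opprB. Qed.
Lemma absV x : abs (x^-1) = (abs x)^-1.
Proof.
have [->|nx] := eqVneq x 0; first by rewrite invr0 abs0 invr0.
have n0 : abs x != 0 by apply/eqP => /abs_eq0 /eqP; rewrite (negPf nx).
apply: (mulfI n0); rewrite -absM divff // mulfV // abs1 //.
Qed.
Lemma absDle x y e : abs x < e -> abs y < e -> abs (x + y) < e.
Proof. move=> h1 h2; apply: le_lt_trans (absD x y) _; by rewrite gt_max h1 h2. Qed.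
Lemma abs_near x a : abs (x - a) < abs a -> abs x = abs a.
Proof.
move=> h.
have h1 := absD (x - a) a; rewrite subrK in h1.
have h2 := absD (a - x) x; rewrite subrK in h2.
rewrite absB in h2.
apply/eqP; rewrite eq_le; apply/andP; split.
  by move: h1; rewrite (max_idPr (ltW h)).
move: h2; rewrite le_max => /orP [h3|//].
by move: (lt_le_trans h h3); rewrite ltxx.
Qed.

Notation cvg := (seq_cvg abs).

Lemma cvg_ext u v l : (forall n, u n = v n) -> cvg v l -> cvg u l.
Proof. by move=> e h eps /h [N HN]; exists N => n /HN; rewrite e. Qed.

Lemma cvg_const a : cvg (fun _ => a) a.
Proof. by move=> eps he; exists 0%N => n _; rewrite subrr abs0. Qed.

Lemma cvg2 u v a b (P : R -> Prop) : cvg u a -> cvg v b ->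
  forall eps, 0 < eps -> exists N, forall n, (N <= n)%N -> abs (u n - a) < eps /\ abs (v n - b) < eps.
Proof.
move=> hu hv eps he; have [N1 h1] := hu eps he; have [N2 h2] := hv eps he.
exists (maxn N1 N2) => n hn; split; [apply: h1|apply: h2]; apply: leq_trans hn.
  exact: leq_maxl. exact: leq_maxr.
Qed.

Lemma cvg_add u v a b : cvg u a -> cvg v b -> cvg (fun n => u n + v n) (a + b).
Proof.
move=> hu hv eps he; have [N h] := cvg2 (fun _ => True) hu hv he.
exists N => n /h [h1 h2].
have -> : u n + v n - (a + b) = (u n - a) + (v n - b) by ring.
exact: absDle.
Qed.

Lemma cvg_opp u a : cvg u a -> cvg (fun n => - u n) (- a).
Proof.
move=> hu eps /hu [N h]; exists N => n /h.
by rewrite -opprD absN.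
Qed.

Lemma cvg_sub u v a b : cvg u a -> cvg v b -> cvg (fun n => u n - v n) (a - b).
Proof. by move=> hu hv; apply: cvg_add => //; apply: cvg_opp. Qed.

Lemma cvg_mul u v a b : cvg u a -> cvg v b -> cvg (fun n => u n * v n) (a * b).
Proof.
move=> hu hv eps he.
set A := abs a; set B := abs b.
have hA0 : 0 <= A := abs_ge0 a. have hB0 : 0 <= B := abs_ge0 b.
have hpos : 0 < 1 + A + B by lra.
set d := Num.min 1 (eps / (1 + A + B)).
have hd : 0 < d by rewrite lt_min ltr01 /= divr_gt0.
have hd1 : d <= 1 by rewrite ge_min lexx.
have hde : d * (1 + A + B) <= eps.
  by rewrite -ler_pdivlMr // ge_min lexx orbT.
have [N h] := cvg2 (fun _ => True) hu hv hd.
exists N => n /h [h1 h2].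
have -> : u n * v n - a * b = (u n - a) * (v n - b) + (a * (v n - b) + (u n - a) * b) by ring.
have p0 := abs_ge0 (u n - a). have q0 := abs_ge0 (v n - b).
apply: absDle; first by rewrite absM; nra.
apply: absDle; rewrite absM -/A -/B; nra.
Qed.

Lemma cvg_inv u a : a != 0 -> cvg u a -> cvg (fun n => (u n)^-1) a^-1.
Proof.
move=> na hu eps he.
set A := abs a.
have hA : 0 < A.
  rewrite lt_def abs_ge0 andbT; apply/eqP => /abs_eq0 /eqP; by rewrite (negPf na).
set d := Num.min A (eps * A * A).
have hd : 0 < d by rewrite lt_min hA /= !mulr_gt0.
have [N h] := hu d hd.
exists N => n /h hn.
have hnA : abs (u n - a) < A by apply: lt_le_trans hn _; rewrite ge_min lexx.
have hnE : abs (u n - a) < eps * A * A by apply: lt_le_trans hn _; rewrite ge_min lexx orbT.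
have eA := abs_near hnA.
have nu : u n != 0.
  apply/eqP => e; move: eA; rewrite e abs0 -/A => e'; by move: hA; rewrite -e' ltxx.
have -> : (u n)^-1 - a^-1 = (u n)^-1 * a^-1 * - (u n - a) by field; rewrite nu na.
rewrite !absM absN !absV eA -/A.
have hAi : 0 < A^-1 by rewrite invr_gt0.
have -> : eps = A^-1 * A^-1 * (eps * A * A) by field; rewrite lt0r_neq0.
rewrite ltr_pM2l //; by rewrite mulr_gt0.
Qed.

Lemma cvg_unique u a b : cvg u a -> cvg u b -> a = b.
Proof.
move=> ha hb; have [//|nab] := eqVneq a b; exfalso.
have he : 0 < abs (a - b).
  rewrite lt_def abs_ge0 andbT; apply/eqP => /abs_eq0 /eqP; by rewrite subr_eq0 (negPf nab).
have [N h] := cvg2 (fun _ => True) ha hb he.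
have [h1 h2] := h N (leqnn N).
have : abs (- (u N - a) + (u N - b)) < abs (a - b).
  apply: absDle => //; by rewrite absN.
have -> : - (u N - a) + (u N - b) = a - b by ring.
by rewrite ltxx.
Qed.

Definition incr (phi : nat -> nat) := forall m n, (m < n)%N -> (phi m < phi n)%N.

Lemma incr_ge phi : incr phi -> forall n, (n <= phi n)%N.
Proof.
move=> h; elim=> [//|n IH]; apply: leq_ltn_trans IH (h _ _ (ltnSn n)).
Qed.

Lemma incr_comp phi psi : incr phi -> incr psi -> incr (fun n => phi (psi n)).
Proof. by move=> h1 h2 m n /h2 /h1. Qed.

Lemma cvg_sub_seq u l phi : incr phi -> cvg u l -> cvg (fun n => u (phi n)) l.
Proof.
move=> hp hu eps /hu [N h]; exists N => n hn; apply: h.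
apply: leq_trans hn (incr_ge hp n).
Qed.

Lemma incr_S : incr S. Proof. by move=> m n. Qed.


Lemma unif (I : finType) (P : I -> nat -> Prop) :
  (forall i, exists N, forall n, (N <= n)%N -> P i n) ->
  exists N, forall i n, (N <= n)%N -> P i n.
Proof.
move=> H.
suff: forall L : seq I, exists N, forall i, i \in L -> forall n, (N <= n)%N -> P i n.
  by move=> /(_ (enum I)) [N h]; exists N => i n; apply: h; rewrite mem_enum.
elim=> [|a L [N IH]]; first by exists 0%N.
have [Na ha] := H a.
exists (maxn N Na) => i; rewrite inE => /orP [/eqP->|iL] n hn.
  by apply: ha; apply: leq_trans hn; apply: leq_maxr.
by apply: IH => //; apply: leq_trans hn; apply: leq_maxl.
Qed.

Lemma extract (I : finType) (Kf : I -> C -> Prop) (hK0 : forall i, Kf i 0)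
  (hcomp : forall i (u : nat -> C), (forall n, Kf i (u n) /\ abs (u n) <= 1) ->
     exists (phi : nat -> nat) l, incr phi /\ Kf i l /\ cvg (fun n => u (phi n)) l)
  (u : nat -> I -> C) : (forall n i, Kf i (u n i) /\ abs (u n i) <= 1) ->
  exists (phi : nat -> nat) (l : I -> C), incr phi /\
    forall i, Kf i (l i) /\ cvg (fun n => u (phi n) i) (l i).
Proof.
move=> hu.
suff: forall L : seq I, exists (phi : nat -> nat) (l : I -> C), incr phi /\
    forall i, i \in L -> Kf i (l i) /\ cvg (fun n => u (phi n) i) (l i).
  move=> /(_ (enum I)) [phi [l [hp h]]]; exists phi, l; split => // i.
  by apply: h; rewrite mem_enum.
elim=> [|a L [phi [l [hp IH]]]].
  by exists id, (fun _ => 0); split => // m n.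
have [psi [la [hpsi [hla hc]]]] := hcomp a (fun n => u (phi n) a) (fun n => hu (phi n) a).
exists (fun n => phi (psi n)), (fun i => if i == a then la else l i).
split; first exact: incr_comp.
move=> i; rewrite inE; case: eqP => [->|_] /=; first by [].
move=> iL; have [k c] := IH i iL; split => //.
exact: (cvg_sub_seq (u := fun n => u (phi n) i)).
Qed.

Section Sub.
Variable Kf : C -> Prop.
Hypothesis hKf : is_subfield Kf.
Lemma K0 : Kf 0. Proof. by case: hKf. Qed.
Lemma K1 : Kf 1. Proof. by case: hKf => _ []. Qed.
Lemma KB x y : Kf x -> Kf y -> Kf (x - y). Proof. by case: hKf => _ [_ [h _]] /h H /H []. Qed.
Lemma KM x y : Kf x -> Kf y -> Kf (x * y). Proof. by case: hKf => _ [_ [h _]] /h H /H []. Qed.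
Lemma KV x : Kf x -> Kf x^-1. Proof. by case: hKf => _ [_ [_ h]] /h. Qed.
Lemma KN x : Kf x -> Kf (- x). Proof. by move=> h; rewrite -sub0r; apply: KB => //; apply: K0. Qed.
Lemma KD x y : Kf x -> Kf y -> Kf (x + y).
Proof. by move=> h1 h2; rewrite -(opprK y); apply: KB => //; apply: KN. Qed.

Lemma normalize (I : finType) (f : I -> C) : (forall i, Kf (f i)) -> (exists i, f i != 0) ->
  exists c, Kf c /\ c != 0 /\ (forall i, abs (c * f i) <= 1) /\ exists i, abs (c * f i) = 1.
Proof.
move=> hf [j nj].
have [im _ hmax] := @arg_maxP _ R I j xpredT (fun i => abs (f i)) isT.
have hpos : 0 < abs (f j).
  rewrite lt_def abs_ge0 andbT; apply/eqP => /abs_eq0 /eqP; by rewrite (negPf nj).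
have hposm : 0 < abs (f im) by apply: lt_le_trans hpos (hmax j isT).
have nim : f im != 0 by apply/eqP => e; move: hposm; rewrite e abs0 ltxx.
exists (f im)^-1; split; first exact: KV.
split; first by rewrite invr_eq0.
split.
  move=> i; rewrite absM absV mulrC ler_pdivrMr // mul1r.
  exact: hmax.
by exists im; rewrite mulVf // abs1.
Qed.
End Sub.

End Abs.

Section Mx.
Variable C : fieldType.

Lemma I2P (i : 'I_2) : i = i0 \/ i = i1.
Proof. case: i => [[|[|//]]] Hi; [left|right]; exact: val_inj. Qed.

Lemma liftI1 : lift ord0 ord0 = i1 :> 'I_2. Proof. exact: val_inj. Qed.

Lemma mul2E m n (A : 'M[C]_(m, 2)) (B : 'M[C]_(2, n)) i k :
  (A *m B) i k = A i i0 * B i0 k + A i i1 * B i1 k.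
Proof. by rewrite mxE !big_ord_recl big_ord0 addr0 liftI1. Qed.

Lemma det22 (A : 'M[C]_2) : \det A = A i0 i0 * A i1 i1 - A i0 i1 * A i1 i0.
Proof.
rewrite (expand_det_row _ ord0) !big_ord_recl big_ord0 /cofactor !det_mx11 !mxE /=.
rewrite liftI1 /bump /= (_ : lift i1 _ = i0); last exact: val_inj.
rewrite expr0 /i0 /=; ring.
Qed.

Definition adjx (A : 'M[C]_2) : 'M[C]_2 :=
  \matrix_(i < 2, j < 2) (if i == i0 then (if j == i0 then A i1 i1 else - A i0 i1)
                          else (if j == i0 then - A i1 i0 else A i0 i0)).

Lemma mul_adjx (A : 'M[C]_2) : A *m adjx A = \det A *: 1%:M.
Proof.
apply/matrixP => i j; rewrite mul2E !mxE det22.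
by case: (I2P i) => ->; case: (I2P j) => -> /=; ring.
Qed.

Lemma invmx_adjx (A : 'M[C]_2) : \det A != 0 -> invmx A = (\det A)^-1 *: adjx A.
Proof.
move=> nd.
have uA : A \in unitmx by rewrite unitmxE unitfE.
rewrite -[RHS](mulKmx uA) -scalemxAr mul_adjx scalerA mulVf // scale1r.
by rewrite mulmx1.
Qed.

Definition det2v (u v : 'cV[C]_2) := u i0 ord0 * v i1 ord0 - u i1 ord0 * v i0 ord0.

Lemma cV2_eq (u v : 'cV[C]_2) : u i0 ord0 = v i0 ord0 -> u i1 ord0 = v i1 ord0 -> u = v.
Proof.
move=> h0 h1; apply/matrixP => i j; rewrite (ord1 j).
by case: (I2P i) => ->.
Qed.

Lemma cV2_nz (u : 'cV[C]_2) : u != 0 -> u i0 ord0 != 0 \/ u i1 ord0 != 0.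
Proof.
move=> nu; case: (eqVneq (u i0 ord0) 0) => h0; last by left.
case: (eqVneq (u i1 ord0) 0) => h1; last by right.
by move: nu; rewrite (@cV2_eq u 0) ?eqxx // mxE.
Qed.

Lemma par (w x : 'cV[C]_2) : w != 0 -> det2v w x = 0 -> exists c, x = c *: w.
Proof.
rewrite /det2v => nw e.
case: (cV2_nz nw) => h.
  exists (x i0 ord0 / w i0 ord0); apply: cV2_eq; rewrite !mxE.
    by field.
  have E : w i0 ord0 * x i1 ord0 = x i0 ord0 * w i1 ord0 by apply/eqP; rewrite -subr_eq0; apply/eqP; rewrite -e; ring.
  by rewrite -[x i1 ord0](mulKf h) E; field.
exists (x i1 ord0 / w i1 ord0); apply: cV2_eq; rewrite !mxE; last by field.
have E : w i1 ord0 * x i0 ord0 = x i1 ord0 * w i0 ord0 by apply/eqP; rewrite -subr_eq0 -oppr_eq0; apply/eqP; rewrite -e; ring.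
by rewrite -[x i0 ord0](mulKf h) E; field.
Qed.

Lemma det2vZ c (u v : 'cV[C]_2) : det2v (c *: u) v = c * det2v u v.
Proof. rewrite /det2v !mxE; ring. Qed.

Lemma par_trans (w v x : 'cV[C]_2) : v != 0 -> det2v w v = 0 -> det2v v x = 0 -> det2v w x = 0.
Proof.
move=> nv h1 h2.
have h1' : det2v v w = 0 by move: h1; rewrite /det2v => e; rewrite -[RHS]oppr0 -e; ring.
have [a ->] := par nv h1'; have [b ->] := par nv h2.
rewrite /det2v !mxE; ring.
Qed.

Lemma M2_nz (A : 'M[C]_2) : A != 0 -> exists i j, A i j != 0.
Proof.
move=> nA.
case: (eqVneq (A i0 i0) 0) => h00; last by exists i0, i0.
case: (eqVneq (A i0 i1) 0) => h01; last by exists i0, i1.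
case: (eqVneq (A i1 i0) 0) => h10; last by exists i1, i0.
case: (eqVneq (A i1 i1) 0) => h11; last by exists i1, i1.
case/eqP: nA; apply/matrixP => i j; rewrite mxE.
by case: (I2P i) => ->; case: (I2P j) => ->.
Qed.
End Mx.

Section Ch.
Variables (R : realType) (C : closedFieldType) (abs : C -> R).
Hypothesis hAbs : nonarch_abs abs.
Notation cvg := (seq_cvg abs).

Definition mxa (u : 'cV[C]_2) := Num.max (abs (u i0 ord0)) (abs (u i1 ord0)).

Lemma mxa_ge0 u : 0 <= mxa u.
Proof. by rewrite /mxa le_max abs_ge0. Qed.

Lemma chordal_ge0 u x : 0 <= chordal abs u x.
Proof. by rewrite /chordal divr_ge0 ?abs_ge0 // mulr_ge0 // le_max abs_ge0. Qed.

Lemma mxa0 u : mxa u = 0 -> u i0 ord0 = 0 /\ u i1 ord0 = 0.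
Proof.
rewrite /mxa => e.
have h0 : abs (u i0 ord0) <= 0 by rewrite -e le_max lexx.
have h1 : abs (u i1 ord0) <= 0 by rewrite -e le_max lexx orbT.
split; apply/(abs_eq0 hAbs); apply/eqP; rewrite eq_le (abs_ge0 hAbs) andbT //.
Qed.

Lemma chordal_num u x : abs (det2v u x) = chordal abs u x * (mxa u * mxa x).
Proof.
rewrite /chordal -/(mxa u) -/(mxa x) /det2v.
have [e|ne] := eqVneq (mxa u * mxa x) 0.
  rewrite e mulr0; apply/(abs_eq0 hAbs).
  move/eqP: e; rewrite mulf_eq0 => /orP [] /eqP /mxa0 [-> ->]; ring.
by rewrite divfK.
Qed.

Lemma chordalZ c u x : c != 0 -> chordal abs (c *: u) x = chordal abs u x.
Proof.
move=> nc; rewrite /chordal !mxE !(absM hAbs).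
have hc : 0 <= abs c by apply: abs_ge0.
have nc' : abs c != 0 by apply/eqP => /(abs_eq0 hAbs) /eqP; rewrite (negPf nc).
rewrite -maxr_pMr //.
have -> : c * u i0 ord0 * x i1 ord0 - c * u i1 ord0 * x i0 ord0 = c * (u i0 ord0 * x i1 ord0 - u i1 ord0 * x i0 ord0) by ring.
by rewrite (absM hAbs) -[abs c * _ * Num.max _ _]mulrA invfM mulrACA mulfV // mul1r.
Qed.

Lemma limit_det (v : nat -> 'cV[C]_2) (w x : 'cV[C]_2) (B : R) :
  (forall n i, abs (v n i ord0) <= B) ->
  (forall i, cvg (fun n => v n i ord0) (w i ord0)) ->
  (forall eps, 0 < eps -> exists N, forall n, (N <= n)%N -> chordal abs (v n) x < eps) ->
  det2v w x = 0.
Proof.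
move=> hB hv hch.
have c1 : cvg (fun n => det2v (v n) x) (det2v w x).
  apply: (cvg_sub hAbs); apply: (cvg_mul hAbs) => //; exact: (cvg_const hAbs).
apply: (cvg_unique hAbs c1).
have B0 : 0 <= B by apply: le_trans (abs_ge0 hAbs _) (hB 0%N i0).
move=> eps he.
set D := B * mxa x + 1.
have hD : 0 < D by rewrite /D; have := mxa_ge0 x; nra.
have [N hN] := hch (eps / D) (divr_gt0 he hD).
exists N => n /hN hn.
rewrite subr0 chordal_num.
have ch0 := chordal_ge0 (v n) x.
have m1 : mxa (v n) <= B by rewrite /mxa ge_max !hB.
have m2 : mxa (v n) * mxa x <= B * mxa x by apply: ler_wpM2r => //; apply: mxa_ge0.
have m3 : chordal abs (v n) x * (mxa (v n) * mxa x) <= chordal abs (v n) x * (B * mxa x).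
  by apply: ler_wpM2l.
have m4 : chordal abs (v n) x * D < eps by rewrite -ltr_pdivlMr.
apply: le_lt_trans m3 _; apply: le_lt_trans m4.
by rewrite /D mulrDr mulr1 lerDl.
Qed.

Lemma mcvg_mul m n (u : nat -> 'M[C]_(m, 2)) (v : nat -> 'M[C]_(2, n)) (a : 'M[C]_(m, 2)) (b : 'M[C]_(2, n)) :
  (forall i j, cvg (fun k => u k i j) (a i j)) -> (forall i j, cvg (fun k => v k i j) (b i j)) ->
  forall i j, cvg (fun k => (u k *m v k) i j) ((a *m b) i j).
Proof.
move=> hu hv i j; apply: (cvg_ext (fun k => mul2E _ _ _ _)); rewrite mul2E.
by apply: (cvg_add hAbs); apply: (cvg_mul hAbs).
Qed.

Lemma mcvg_det (u : nat -> 'M[C]_2) (a : 'M[C]_2) :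
  (forall i j, cvg (fun k => u k i j) (a i j)) -> cvg (fun k => \det (u k)) (\det a).
Proof.
move=> hu; apply: (cvg_ext (fun k => det22 _)); rewrite det22.
by apply: (cvg_sub hAbs); apply: (cvg_mul hAbs).
Qed.

Lemma mcvg_adjx (u : nat -> 'M[C]_2) (a : 'M[C]_2) :
  (forall i j, cvg (fun k => u k i j) (a i j)) -> forall i j, cvg (fun k => adjx (u k) i j) (adjx a i j).
Proof.
move=> hu i j; rewrite [adjx a i j]mxE.
case: (I2P i) => ->; case: (I2P j) => -> /=;
  (apply: cvg_ext => [k|]; [by rewrite mxE /= | by try apply: (cvg_opp hAbs)]).
Qed.

Lemma mcvg_scale m n (c : nat -> C) (u : nat -> 'M[C]_(m, n)) l (a : 'M[C]_(m, n)) :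
  cvg c l -> (forall i j, cvg (fun k => u k i j) (a i j)) ->
  forall i j, cvg (fun k => (c k *: u k) i j) ((l *: a) i j).
Proof.
move=> hc hu i j; rewrite [(l *: a) i j]mxE.
apply: cvg_ext => [k|]; first by rewrite mxE.
exact: (cvg_mul hAbs).
Qed.

End Ch.
Unset Implicit Arguments.

Lemma choice2 (A B T : Type) (P : A -> B -> T -> Prop) :
  (forall a b, exists t, P a b t) -> exists f : A -> B -> T, forall a b, P a b (f a b).
Proof.
move=> h; exists (fun a b => proj1_sig (constructive_indefinite_description _ (h a b))).
move=> a b; exact: proj2_sig.
Qed.

Lemma choice1 (A T : Type) (P : A -> T -> Prop) :
  (forall a, exists t, P a t) -> exists f : A -> T, forall a, P a (f a).
Proof.
move=> h; exists (fun a => proj1_sig (constructive_indefinite_description _ (h a))).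
move=> a; exact: proj2_sig.
Qed.

Theorem lemma2p5 (p : nat) (R : realType) (C : closedFieldType) (abs : C -> R)
  (hC : is_C_field abs p)
  (S : finType) (hS : (0 < #|S|)%N)
  (K : S -> C -> Prop) (hK : forall s, embedded_local_field abs (K s))
  (G : (S -> 'M[C]_2) -> Prop) (hG : pgl_subgroup K G)
  (hdisc : pgl_discrete abs G)
  (x : S -> 'cV[C]_2) (hx : limit_point abs G x) :
  exists s : S, in_P1 (K s) (x s).
Proof.
case: hC => _ [hAbs _].
case: hG => [hGK [hG1 [hGmul [hGinv hGsc]]]].
case: hdisc => [eps [heps hdisc']].
case: hx => [hx0 [y [gam [hy0 [hgam [hdist hch]]]]]].
have hKf : forall s, is_subfield (K s) by move=> s; case: (hK s).
have hcomp : forall s (u : nat -> C), (forall n, K s (u n) /\ abs (u n) <= 1) ->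
     exists (phi : nat -> nat) l, incr phi /\ K s l /\ seq_cvg abs (fun n => u (phi n)) l.
  by move=> s; case: (hK s) => _ [_ h].
have hnorm : forall j s, exists c, K s c /\ c != 0 /\
    (forall q : 'I_2 * 'I_2, abs (c * gam j s q.1 q.2) <= 1) /\
    exists q : 'I_2 * 'I_2, abs (c * gam j s q.1 q.2) = 1.
  move=> j s; apply: (normalize hAbs (hKf s) (f := fun q : 'I_2 * 'I_2 => gam j s q.1 q.2)).
    by move=> q; case: (hGK _ (hgam j) s) => h _; apply: h.
  case: (hGK _ (hgam j) s) => _ nd.
  have : gam j s != 0 by apply: contraNneq nd => ->; rewrite det0.
  by move/M2_nz => [i [k h]]; exists (i, k).
have [c hc] := @choice2 _ _ _ _ hnorm.
pose M := fun j s => c j s *: gam j s.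
have hME : forall j s i k, M j s i k = c j s * gam j s i k by move=> *; rewrite /M mxE.
have hMK : forall j s i k, K s (M j s i k).
  move=> j s i k; rewrite hME; apply: KM; first exact: hKf.
    by case: (hc j s).
  by case: (hGK _ (hgam j) s) => h _; apply: h.
have hM1 : forall j s i k, abs (M j s i k) <= 1.
  by move=> j s i k; rewrite hME; case: (hc j s) => _ [_ [h _]]; apply: (h (i, k)).
have [phi [l [hphi hl]]] := extract (Kf := fun q : S * 'I_2 * 'I_2 => K q.1.1)
  (fun q => K0 (hKf q.1.1)) (fun q => hcomp q.1.1) (u := fun n q => M n q.1.1 q.1.2 q.2)
  (fun n q => conj (hMK n q.1.1 q.1.2 q.2) (hM1 n q.1.1 q.1.2 q.2)).
pose h := fun s => \matrix_(i < 2, k < 2) l (s, i, k).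
have hconv : forall s i k, seq_cvg abs (fun n => M (phi n) s i k) (h s i k).
  by move=> s i k; rewrite mxE; case: (hl (s, i, k)).
have hhK : forall s i k, K s (h s i k).
  by move=> s i k; rewrite mxE; case: (hl (s, i, k)).
have hh0 : forall s, h s != 0.
  move=> s; apply/eqP => e.
  have [N HN] := unif (P := fun (q : 'I_2 * 'I_2) n => abs (M (phi n) s q.1 q.2 - h s q.1 q.2) < 1)
    (fun q => hconv s q.1 q.2 1 ltr01).
  case: (hc (phi N) s) => _ [_ [_ [q hq]]].
  have := HN q N (leqnn N); rewrite e (_ : (0 : 'M[C]_2) q.1 q.2 = 0) ?mxE // subr0 ?hME hq ltxx //.
have hMG : forall j, G (M j).
  move=> j; apply: hGsc => // s; case: (hc j s) => [a [b _]]; by split.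
have hdetM : forall j s, \det (M j s) != 0.
  move=> j s; rewrite /M detZ mulf_neq0 ?expf_neq0 //; first by case: (hc j s) => _ [].
  by case: (hGK _ (hgam j) s).
case: (pickP (fun s => \det (h s) == 0)) => [s /eqP hs | hB]; last first.
  exfalso.
  pose Nm := fun n s => M (phi n) s *m invmx (M (phi n.+1) s).
  have hGN : forall n, G (Nm n).
    by move=> n; apply: hGmul; [apply: hMG | apply: hGinv; apply: hMG].
  have hconvS : forall s i k, seq_cvg abs (fun n => M (phi n.+1) s i k) (h s i k).
    move=> s i k; exact: (cvg_sub_seq (u := fun n => M (phi n) s i k) incr_S (hconv s i k)).
  have hNc : forall q : S * 'I_2 * 'I_2,
      exists N, forall n, (N <= n)%N -> abs (Nm n q.1.1 q.1.2 q.2 - 1%:M q.1.2 q.2) < eps.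
    move=> [[s i] k] /=.
    have nh : \det (h s) != 0 by rewrite hB.
    have := mcvg_scale hAbs (cvg_inv hAbs nh (mcvg_det hAbs (hconvS s)))
      (mcvg_mul hAbs (hconv s) (mcvg_adjx hAbs (hconvS s))) i k.
    rewrite mul_adjx scalerA mulVf // scale1r => H.
    have Hc : seq_cvg abs (fun n => Nm n s i k) (1%:M i k).
      apply: (cvg_ext _ H) => n.
      by rewrite /Nm invmx_adjx // scalemxAr.
    exact: Hc eps heps.
  have [N0 HN0] := unif hNc.
  have peq := hdisc' (Nm N0) (hGN N0) (fun s i k => HN0 (s, i, k) N0 (leqnn N0)).
  apply: (hdist (phi N0) (phi N0.+1)).
    by move=> e; have := hphi N0 N0.+1 (ltnSn N0); rewrite e ltnn.
  move=> s; have [d [nd e]] := peq s.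
  have uB : M (phi N0.+1) s \in unitmx by rewrite unitmxE unitfE.
  have e2 : M (phi N0) s = d *: M (phi N0.+1) s.
    by rewrite -(mulmxKV uB (M (phi N0) s)); rewrite /Nm in e; rewrite e -scalemxAl mul1mx.
  have nca : c (phi N0) s != 0 by case: (hc (phi N0) s) => _ [].
  have ncb : c (phi N0.+1) s != 0 by case: (hc (phi N0.+1) s) => _ [].
  exists ((c (phi N0) s)^-1 * (d * c (phi N0.+1) s)); split.
    by rewrite mulf_neq0 ?invr_eq0 // mulf_neq0.
  rewrite -scalerA -scalerA -/(M (phi N0.+1) s) -e2 /M scalerA mulVf // scale1r //.
exists s.
have [i [k nik]] := M2_nz (hh0 s).
have hKs := hKf s.
have [eHy|nHy] := eqVneq (h s *m y s) 0; last first.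
  pose v := fun n => M (phi n) s *m y s.
  have hvb : forall n i, abs (v n i ord0) <= mxa abs (y s).
    move=> n j; rewrite /v mul2E.
    apply: le_trans (absD hAbs _ _) _; rewrite ge_max !(absM hAbs).
    have m0 := abs_ge0 hAbs (y s i0 ord0). have m1 := abs_ge0 hAbs (y s i1 ord0).
    have a0 := hM1 (phi n) s j i0. have a1 := hM1 (phi n) s j i1.
    have a0' := abs_ge0 hAbs (M (phi n) s j i0). have a1' := abs_ge0 hAbs (M (phi n) s j i1).
    have b0 : abs (y s i0 ord0) <= mxa abs (y s) by rewrite /mxa le_max lexx.
    have b1 : abs (y s i1 ord0) <= mxa abs (y s) by rewrite /mxa le_max lexx orbT.
    apply/andP; split; nra.
  have hvc : forall j, seq_cvg abs (fun n => v n j ord0) ((h s *m y s) j ord0).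
    move=> j; apply: (mcvg_mul hAbs (hconv s)) => *; exact: cvg_const.
  have hvch : forall eps, 0 < eps -> exists N, forall n, (N <= n)%N -> chordal abs (v n) (x s) < eps.
    move=> e he; have [N HN] := hch s e he; exists N => n hn.
    rewrite /v /M -scalemxAl chordalZ //; last by case: (hc (phi n) s) => _ [].
    apply: HN; exact: leq_trans hn (incr_ge hphi n).
  have d1 := limit_det hAbs hvb hvc hvch.
  pose w := col k (h s).
  have nw : w != 0.
    apply/eqP => e; move/eqP: nik; apply.
    by have := congr1 (fun m : 'cV[C]_2 => m i ord0) e; rewrite !mxE.
  have dw : det2v w (h s *m y s) = 0.
    rewrite /det2v !mul2E !mxE; move: hs; rewrite det22 => hd.
    case: (I2P k) => -> .
      transitivity (y s i1 ord0 * (h s i0 i0 * h s i1 i1 - h s i0 i1 * h s i1 i0)); first by rewrite !mxE; ring.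
      by rewrite hd mulr0.
    transitivity (- y s i0 ord0 * (h s i0 i0 * h s i1 i1 - h s i0 i1 * h s i1 i0)); first by rewrite !mxE; ring.
    by rewrite hd mulr0.
  have [a ea] := par nw (par_trans nHy dw d1).
  exists w; split => //; split; last by exists a.
  by move=> j; rewrite mxE.
pose y' : 'cV[C]_2 := \col_(j < 2) (if j == i0 then - h s i i1 else h s i i0).
have ny' : y' != 0.
  apply/eqP => e; move/eqP: nik; apply.
  have e0 := congr1 (fun m : 'cV[C]_2 => m i0 ord0) e.
  have e1 := congr1 (fun m : 'cV[C]_2 => m i1 ord0) e.
  move: e0 e1; rewrite /y' !mxE /= => e0 e1.
  case: (I2P k) => ->; first by rewrite -e1.
  by rewrite -[LHS]opprK e0 oppr0.
have hy'K : forall j, K s (y' j ord0).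
  move=> j; rewrite /y' mxE; case: (j == i0); [apply: KN => //|]; exact: hhK.
have dy : det2v y' (y s) = 0.
  have := congr1 (fun m : 'cV[C]_2 => m i ord0) eHy; rewrite /= mul2E [RHS]mxE => e.
  rewrite /det2v /y'.
  transitivity (- (h s i i0 * y s i0 ord0 + h s i i1 * y s i1 ord0)); first by rewrite !mxE /=; ring.
  by rewrite e oppr0.
have [a ea] := par ny' dy.
have na : a != 0 by apply: contraNneq (hy0 s) => a0; rewrite ea a0 scale0r.
pose z := fun n => gam n s *m y'.
have hzK : forall n j, K s (z n j ord0).
  move=> n j; rewrite /z mul2E; case: (hGK _ (hgam n) s) => hg _.
  by apply: KD => //; apply: KM.
have hz0 : forall n, exists j, z n j ord0 != 0.
  move=> n; case: (hGK _ (hgam n) s) => _ nd.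
  have ug : gam n s \in unitmx by rewrite unitmxE unitfE.
  have nz : z n != 0.
    apply: contraNneq ny' => e; by rewrite -(mulKmx ug y') -/(z n) e mulmx0.
  by case: (cV2_nz nz) => H; [exists i0 | exists i1].
have [d hd] := @choice1 _ _ _ (fun n => normalize hAbs hKs (f := fun j : 'I_2 => z n j ord0) (hzK n) (hz0 n)).
have [psi [l2 [hpsi hl2]]] := extract (Kf := fun _ : 'I_2 => K s) (fun _ => K0 hKs)
  (fun _ => hcomp s) (u := fun n j => d n * z n j ord0)
  (fun n j => conj (KM hKs (proj1 (hd n)) (hzK n j)) (proj1 (proj2 (proj2 (hd n))) j)).
pose w := \col_(j < 2) l2 j.
have nw : w != 0.
  apply/eqP => e.
  have [N HN] := unif (P := fun (j : 'I_2) n => abs (d (psi n) * z (psi n) j ord0 - l2 j) < 1)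
    (fun j => proj2 (hl2 j) 1 ltr01).
  case: (hd (psi N)) => _ [_ [_ [q hq]]].
  have e' := congr1 (fun m : 'cV[C]_2 => m q ord0) e; rewrite /= !mxE in e'.
  by have := HN q N (leqnn N); rewrite e' subr0 hq ltxx.
pose v := fun n => d (psi n) *: z (psi n).
have hvb : forall n j, abs (v n j ord0) <= 1.
  by move=> n j; rewrite /v mxE; case: (hd (psi n)) => _ [_ [H _]]; apply: H.
have hvc : forall j, seq_cvg abs (fun n => v n j ord0) (w j ord0).
  move=> j; rewrite /w mxE; apply: (cvg_ext _ (proj2 (hl2 j))) => n; by rewrite /v mxE.
have hvch : forall eps, 0 < eps -> exists N, forall n, (N <= n)%N -> chordal abs (v n) (x s) < eps.
  move=> e he; have [N HN] := hch s e he; exists N => n hn.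
  rewrite /v chordalZ //; last by case: (hd (psi n)) => _ [].
  rewrite -(chordalZ hAbs _ _ na) /z scalemxAr -ea.
  apply: HN; exact: leq_trans hn (incr_ge hpsi n).
have d1 := limit_det hAbs hvb hvc hvch.
have [b eb] := par nw d1.
exists w; split => //; split; last by exists b.
by move=> j; rewrite mxE; case: (hl2 j).
Qed.
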